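(* Let $k_1<k_2<\cdots<k_n$ be positive integers and let $s_1$ be any positive integer. Then there exist a $\delta$-set $\Sigma=\{s_1<s_2<\cdots<s_l\}$ (whose minimum is the prescribed $s_1$) and indices $1\le j_1<j_2<\cdots<j_n<l-1$ such that $s_{j_i+1}-s_{j_i}=k_i$ for every $i=1,\ldots,n$.
   Context: All graphs are finite and simple; $d(u,v)$ denotes the usual graph distance. For a set $J$ of nonnegative integers, a distance $J$-labeling of $G$ is a function $f:V(G)\to J$ with $f(V(G))=J$ such that whenever two distinct vertices $u,v$ satisfy $f(u)=f(v)=k$, we have $d(u,v)=k$. It is proper if every $k\in J\setminus\{0\}$ is the label of at least two vertices. A finite set $\Sigma$ of nonnegative integers is a $\delta$-set if there exists a graph admitting a proper distance $\Sigma$-labeling. *)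

(* Defs.v *)
From mathcomp Require Import all_boot.
Set Implicit Arguments. Unset Strict Implicit. Unset Printing Implicit Defensive.

Definition simple_graph (T : finType) (e : rel T) : Prop :=
  symmetric e /\ irreflexive e.

Definition walk_of_len (T : finType) (e : rel T) (u v : T) (k : nat) : Prop :=
  exists p : seq T, [/\ size p = k, path e u p & last u p = v].

(* d(u,v) = k : the usual graph distance (length of a shortest u-v walk) equals k.
   If u and v are in different components, d(u,v) is infinite and equals no k. *)
Definition gdist_eq (T : finType) (e : rel T) (u v : T) (k : nat) : Prop :=
  walk_of_len e u v k /\ forall m, m < k -> ~ walk_of_len e u v m.

Definition distance_labeling (T : finType) (e : rel T) (J : seq nat) (f : T -> nat) : Prop :=
  [/\ (forall x, f x \in J),
      (forall k, k \in J -> exists x, f x = k) &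
      (forall u v, u != v -> f u = f v -> gdist_eq e u v (f u))].

Definition proper_distance_labeling (T : finType) (e : rel T) (J : seq nat) (f : T -> nat) : Prop :=
  distance_labeling e J f /\
  (forall k, k \in J -> k != 0 -> exists u v, [/\ u != v, f u = k & f v = k]).

Definition delta_set (S : seq nat) : Prop :=
  exists (T : finType) (e : rel T) (f : T -> nat),
    simple_graph e /\ proper_distance_labeling e S f.

(* Main.v *)
Require Import Defs.
From mathcomp Require Import all_boot.
From mathcomp Require Import zify.

Definition pe (M : nat) : rel 'I_M.+1 := fun x y => (x.+1 == y) || (y.+1 == x).

Lemma pe_lb M (u : 'I_M.+1) p : path (pe M) u p ->
  (last u p <= u + size p) && (u <= last u p + size p).
Proof.
elim: p u => [|x p IH] u /=; first by rewrite !addn0 leqnn.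
case/andP => /orP [/eqP H|/eqP H] /IH /andP [H1 H2]; apply/andP; split; lia.
Qed.

Lemma pe_walk M d (u v : 'I_M.+1) : (if u <= v then v - u else u - v) = d ->
  walk_of_len (pe M) u v d.
Proof.
elim: d v => [|d IH] v Hd.
  have -> : v = u by apply: ord_inj; move: Hd; case: ifP => Hc; lia.
  by exists [::].
case: (leqP u v) => Huv.
  have Hw : v.-1 < M.+1 by have := ltn_ord v; lia.
  have [p [Hs Hp Hl]] := IH (inord v.-1) ltac:(rewrite inordK //; rewrite Huv in Hd; case: ifP; lia).
  exists (rcons p v); split; first by rewrite size_rcons Hs.
    rewrite rcons_path Hp Hl /= /pe inordK //; apply/orP; left; apply/eqP; rewrite Huv in Hd; lia.
  by rewrite last_rcons.
have Hw : v.+1 < M.+1 by have := ltn_ord u; lia.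
have [p [Hs Hp Hl]] := IH (inord v.+1) ltac:(rewrite inordK //; rewrite leqNgt Huv /= in Hd; case: ifP; lia).
exists (rcons p v); split; first by rewrite size_rcons Hs.
  rewrite rcons_path Hp Hl /= /pe inordK //; apply/orP; right; apply/eqP; lia.
by rewrite last_rcons.
Qed.

Lemma pe_gdist M (u v : 'I_M.+1) d : (if u <= v then v - u else u - v) = d ->
  gdist_eq (pe M) u v d.
Proof.
move=> Hd; split; first exact: pe_walk.
move=> k Hk [p [Hs Hp Hl]]; have := @pe_lb M u p Hp; rewrite Hl Hs.
move: Hd; case: ifP => Hc; lia.
Qed.

Definition lab m (t : nat) : nat :=
  if t <= m then t + (2*m).+1 else if t < (2*m).+1 then t
  else if t %% 2 == 0 then t %/ 2 else (t + (2*m).+1) %/ 2.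

Lemma lab_spec m t : t < (4*m).+2 ->
  [\/ t <= m /\ lab m t = t + (2*m).+1,
      m < t < (2*m).+1 /\ lab m t = t,
      (2*m).+1 <= t /\ t = 2 * lab m t
    | (2*m).+1 <= t /\ t + (2*m).+1 = 2 * lab m t].
Proof.
rewrite /lab => Ht.
case: (leqP t m) => H1; first by constructor 1.
case: (ltnP t (2*m).+1) => H3; first by constructor 2; split => //; apply/andP.
have Hd := divn_eq t 2.
have Hr : t %% 2 < 2 by rewrite ltn_mod.
case: (boolP (t %% 2 == 0)) => /eqP H5.
  constructor 3; split => //; lia.
constructor 4; split => //.
have -> : t + (2*m).+1 = 2 * (t %/ 2 + m + 1) by lia.
rewrite mulKn //; lia.
Qed.

Lemma lab_pair m t u : t < (4*m).+2 -> u < (4*m).+2 -> t != u -> lab m t = lab m u ->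
  (if t <= u then u - t else t - u) = lab m t.
Proof.
move=> Ht Hu Htu Hl.
have Htu' : t <> u by apply/eqP.
case: (@lab_spec m t Ht) => -[H1 H2]; case: (@lab_spec m u Hu) => -[H3 H4];
case: ifP => H5; lia.
Qed.

Lemma lab_range m t : t < (4*m).+2 -> m < lab m t <= 3 * m + 1.
Proof.
move=> Ht; case: (@lab_spec m t Ht) => -[H1 H2]; lia.
Qed.
Ltac labt := match goal with |- lab ?m ?x = _ => case: (@lab_spec m x ltac:(lia)) => -[? ?]; lia end.

Lemma interval_delta m : delta_set (iota m.+1 (2*m).+1).
Proof.
exists ('I_(4*m).+2 : finType), (pe (4*m).+1), (fun t : 'I_(4*m).+2 => lab m t).
split.
  split; first by move=> x y; rewrite /pe orbC.
  by move=> x; rewrite /pe; apply/negP; case/orP => /eqP; lia.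
split; first split.
- by move=> x; rewrite mem_iota; have := @lab_range m x (ltn_ord x); lia.
- move=> k; rewrite mem_iota => Hk.
  case: (leqP k (2*m)) => Hk2.
    exists (inord k); rewrite inordK; last lia.
    labt.
  exists (inord (k - (2*m).+1)); rewrite inordK; last lia.
  labt.
- move=> u v Huv Hf; apply: pe_gdist.
  have Huv' : nat_of_ord u != nat_of_ord v by apply/eqP => H; move/eqP: Huv; apply; exact: ord_inj H.
  exact (@lab_pair m u v (ltn_ord u) (ltn_ord v) Huv' Hf).
- move=> k; rewrite mem_iota => Hk _.
  case: (leqP k (2*m)) => Hk2.
    exists (inord k), (inord (2*k)); split.
    + apply/eqP => H; have := congr1 (@nat_of_ord _) H; rewrite !inordK; lia.
    + rewrite inordK; last lia; labt.
    + rewrite inordK; last lia; labt.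
  exists (inord (k - (2*m).+1)), (inord (2*k - (2*m).+1)); split.
  + apply/eqP => H; have := congr1 (@nat_of_ord _) H; rewrite !inordK; lia.
  + rewrite inordK; last lia; labt.
  + rewrite inordK; last lia; labt.
Qed.

Section Sum.
Variables (T1 T2 : finType) (e1 : rel T1) (e2 : rel T2).

Definition sume : rel (T1 + T2) := fun x y =>
  match x, y with
  | inl a, inl b => e1 a b
  | inr a, inr b => e2 a b
  | _, _ => false
  end.

Lemma path_inl u p : path sume (inl u) p -> exists p', p = map inl p' /\ path e1 u p'.
Proof.
elim: p u => [|x p IH] u /=; first by exists [::].
case: x => [a|a] //= /andP [H1 /IH [p' [-> H2]]].
by exists (a :: p'); rewrite /= H1 H2.
Qed.

Lemma path_inr u p : path sume (inr u) p -> exists p', p = map inr p' /\ path e2 u p'.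
Proof.
elim: p u => [|x p IH] u /=; first by exists [::].
case: x => [a|a] //= /andP [H1 /IH [p' [-> H2]]].
by exists (a :: p'); rewrite /= H1 H2.
Qed.

Lemma path_map_inl u p : path sume (inl u) (map inl p) = path e1 u p.
Proof. by elim: p u => //= x p IH u; rewrite IH. Qed.
Lemma path_map_inr u p : path sume (inr u) (map inr p) = path e2 u p.
Proof. by elim: p u => //= x p IH u; rewrite IH. Qed.

Lemma gdist_inl u v k : gdist_eq e1 u v k -> gdist_eq sume (inl u) (inl v) k.
Proof.
move=> [[p [Hs Hp Hl]] Hm]; split.
  exists (map inl p); split; first by rewrite size_map.
  - by rewrite path_map_inl.
  - by rewrite last_map Hl.
move=> kk Hk [q [Hs2 Hp2 Hl2]]; have [p2 [Hq Hp2x]] := @path_inl u q Hp2.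
apply: (Hm kk Hk); exists p2; split; first by rewrite -Hs2 Hq size_map.
  done.
by move: Hl2; rewrite Hq last_map => -[].
Qed.

Lemma gdist_inr u v k : gdist_eq e2 u v k -> gdist_eq sume (inr u) (inr v) k.
Proof.
move=> [[p [Hs Hp Hl]] Hm]; split.
  exists (map inr p); split; first by rewrite size_map.
  - by rewrite path_map_inr.
  - by rewrite last_map Hl.
move=> kk Hk [q [Hs2 Hp2 Hl2]]; have [p2 [Hq Hp2x]] := @path_inr u q Hp2.
apply: (Hm kk Hk); exists p2; split; first by rewrite -Hs2 Hq size_map.
  done.
by move: Hl2; rewrite Hq last_map => -[].
Qed.
End Sum.

Lemma delta_cat S1 S2 : delta_set S1 -> delta_set S2 ->
  (forall x, x \in S1 -> x \notin S2) -> delta_set (S1 ++ S2).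
Proof.
move=> [T1 [e1 [f1 [[sy1 ir1] [[l1 l2 l3] p1]]]]] [T2 [e2 [f2 [[sy2 ir2] [[m1 m2 m3] p2]]]]] Hd.
exists (T1 + T2)%type, (@sume T1 T2 e1 e2),
  (fun x => match x with inl a => f1 a | inr b => f2 b end).
split.
  split; first by case=> a [b|b] /=; first [exact: sy1 | exact: sy2 | done].
  by case=> a /=; rewrite ?ir1 ?ir2.
split; first split.
- by case=> a; rewrite mem_cat ?l1 ?m1 ?orbT.
- move=> k; rewrite mem_cat => /orP [/l2 [x Hx]|/m2 [x Hx]].
    by exists (inl x).
  by exists (inr x).
- case=> a; case=> b /= Hab Hf.
  + apply: gdist_inl; apply: l3 => //; apply/eqP => H; move/eqP: Hab; apply; congr inl.
  + by have := Hd _ (l1 a); rewrite Hf m1.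
  + by have := Hd _ (l1 b); rewrite -Hf m1.
  + apply: gdist_inr; apply: m3 => //; apply/eqP => H; move/eqP: Hab; apply; congr inr.
- move=> k; rewrite mem_cat => /orP [Hk Hk0|Hk Hk0].
    have [u [v [Huv Hu Hv]]] := p1 k Hk Hk0.
    exists (inl u), (inl v); split => //; apply/eqP => -[H]; move/eqP: Huv; apply.
  have [u [v [Huv Hu Hv]]] := p2 k Hk Hk0.
  exists (inr u), (inr v); split => //; apply/eqP => -[H]; move/eqP: Huv; apply.
Qed.

Lemma gen ks m : all (fun k => 0 < k) ks ->
  exists (S js : seq nat),
    delta_set S /\ sorted ltn S /\ head 0 S = m.+1 /\
    (forall x, x \in S -> m < x) /\ (2*m).+1 <= size S /\
    size js = size ks /\ sorted ltn js /\
    all (fun j => j.+2 < size S) js /\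
    (forall i, i < size ks ->
       nth 0 S (nth 0 js i).+1 - nth 0 S (nth 0 js i) = nth 0 ks i).
Proof.
elim: ks m => [|k ks IH] m.
  move=> _; exists (iota m.+1 (2*m).+1), [::]; split; first exact: interval_delta.
  split; first exact: iota_ltn_sorted.
  split; first by [].
  split; first by move=> x; rewrite mem_iota; lia.
  by rewrite size_iota.
move=> /= /andP [Hk Hks].
have [S' [js' [D' [So' [H' [M' [Sz' [Sj' [Soj' [Aj' G']]]]]]]]]] := IH (3*m + k) Hks.
exists (iota m.+1 (2*m).+1 ++ S'), ((2*m) :: map (addn (2*m).+1) js').
have HS'0 : nth 0 S' 0 = (3*m+k).+1 by rewrite -H'; case: (S').
split.
  apply: delta_cat => //; first exact: interval_delta.
  move=> x; rewrite mem_iota => Hx; apply/negP => /M'; lia.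
split.
  rewrite (sorted_pairwise ltn_trans) pairwise_cat.
  rewrite -!(sorted_pairwise ltn_trans) iota_ltn_sorted So' andbT.
  rewrite andbT; apply/allrelP => x y; rewrite mem_iota => Hx /M'; lia.
split; first by [].
split; first by move=> x; rewrite mem_cat mem_iota => /orP [|/M']; lia.
split; first by rewrite size_cat size_iota; lia.
split; first by rewrite /= size_map Sj'.
split.
  rewrite (sorted_pairwise ltn_trans) /= pairwise_map; apply/andP; split.
    by apply/allP => j /mapP [j0 _ ->]; lia.
  move: Soj'; rewrite (sorted_pairwise ltn_trans); apply: sub_pairwise => x y /=; lia.
split.
  rewrite /= size_cat size_iota; apply/andP; split; first lia.
  by apply/allP => j /mapP [j0 /(allP Aj') H ->]; lia.
case=> [|i] Hi.
  rewrite (_ : nth 0 (k :: ks) 0 = k) // (_ : nth 0 (2 * m :: [seq (2 * m).+1 + i | i <- js']) 0 = 2*m) //.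
  rewrite !nth_cat size_iota ltnn subnn HS'0 (_ : 2 * m < (2*m).+1) // nth_iota //; lia.
rewrite (_ : nth 0 (k :: ks) i.+1 = nth 0 ks i) // (_ : nth 0 (2 * m :: [seq (2 * m).+1 + i | i <- js']) i.+1 = nth 0 [seq (2 * m).+1 + i | i <- js'] i) //.
rewrite (nth_map 0); last by rewrite Sj'.
rewrite !nth_cat size_iota.
have -> : ((2 * m).+1 + nth 0 js' i < (2 * m).+1) = false by lia.
have -> : (((2 * m).+1 + nth 0 js' i).+1 < (2 * m).+1) = false by lia.
rewrite addnC addnK -addSn addnK; exact: G'.
Qed.

Theorem mainTheorem9 (ks : seq nat) (s1 : nat) :
  sorted ltn ks -> all (fun k => 0 < k) ks -> 0 < s1 ->
  exists (S js : seq nat),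
    delta_set S /\ sorted ltn S /\ head 0 S = s1 /\
    size js = size ks /\ sorted ltn js /\
    all (fun j => j.+2 < size S) js /\
    (forall i, i < size ks ->
       nth 0 S (nth 0 js i).+1 - nth 0 S (nth 0 js i) = nth 0 ks i).
Proof.
move=> _ Hks; case: s1 => // m _.
have [S [js [D [So [H [_ [_ R]]]]]]] := @gen ks m Hks.
by exists S, js.
Qed.
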